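(* $$\lim_{p\downarrow0}\ \limsup_{n\to\infty}\frac{H_n(p)}{n}=0\quad\text{a.s.}$$
   Context: Bernoulli hail graph $\mathcal G(p)$, $p\in(0,1]$: nodes are pairs $(i,n)$, $i\in\mathbb Z$, $n\in\{1,2,\dots\}$. First define $\mathcal G(1)$: for each $n$ and $i$, independently, there is either an edge $(i,n)\to(i+1,n)$ or an edge $(i+1,n)\to(i,n)$, each with probability $1/2$ (spatial edges); for all $i$ and $n\ge2$ there are edges $(i,n)\to(i-1,n-1)$, $(i,n)\to(i,n-1)$, $(i,n)\to(i+1,n-1)$ (time edges). $\mathcal G(p)$ is obtained by coloring each node black with probability $p$ and white with probability $1-p$, independently of everything else; for each white node, its outgoing spatial edges are deleted and its time edges to $(i\pm1,n-1)$ are deleted (only $(i,n)\to(i,n-1)$ is kept). The graphs for different $p$ are naturally coupled (e.g. via uniform variables for the colors) so that $\mathcal G(p)\subseteq\mathcal G(q)$ for $p\le q$. A path is a sequence of nodes joined by directed edges present in $\mathcal G(p)$. The height of a black node is $1$, of a white node $0$; the height of a path is the sum of heights of its nodes. $H^i_n=H^i_n(p)$ is the maximal height of all paths of $\mathcal G(p)$ starting from $(i,n)$; its law does not depend on $i$ and we write $H_n=H_n(p)$. *)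

(* Defs.v *)
From HB Require Import structures.
From mathcomp Require Import all_boot all_order all_algebra.
From mathcomp Require Import all_classical all_reals all_analysis.
Set Implicit Arguments. Unset Strict Implicit. Unset Printing Implicit Defensive.
Import Order.TTheory GRing.Theory Num.Theory.
Local Open Scope classical_set_scope.
Local Open Scope ring_scope.

(* Nodes of the hail graph: (i, n) with i : int, n >= 1 (a node with n = 0
   is never used: edges only relate nodes at levels >= 1). *)
Definition node := (int * nat)%type.

Section Hail.
Variables (R : realType) (T : Type).
(* Randomness:  D v w = true  means the spatial edge (i,n) -> (i+1,n) is
   present (otherwise (i+1,n) -> (i,n));  U v w is the uniform variable
   coupling the colours: node v is black in G(p) iff U v w <= p. *)
Variables (D : node -> T -> bool) (U : node -> T -> R).

Definition black (p : R) (w : T) (v : node) : bool := U v w <= p.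

Definition hail_edge (p : R) (w : T) (a b : node) : bool :=
  let: (i, n) := a in let: (j, m) := b in
  [&& (0 < n)%N, m == n, black p w a &
     ((j == i + 1) && D (i, n) w) || ((i == j + 1) && ~~ D (j, n) w)]
  ||
  [&& (1 < n)%N, m == n.-1 &
     (j == i) || (black p w a && ((j == i + 1) || (j == i - 1)))].

Definition path_height (p : R) (w : T) (x : node) (s : seq node) : nat :=
  count (black p w) (x :: s).

Definition Hmax (p : R) (w : T) (i : int) (n : nat) : \bar R :=
  ereal_sup [set ((path_height p w (i, n) s)%:R)%:E
            | s in [set s | path (hail_edge p w) (i, n) s]].

(* H_n(p) / n, using H_n = H^0_n. *)
Definition Hratio (p : R) (w : T) (n : nat) : \bar R :=
  (Hmax p w 0 n * (n%:R^-1)%:E)%E.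
End Hail.

(* Joint law of the randomness: for every finite set F of nodes, booleans b
   and Borel sets A, the events {D v = b v, U v \in A v} (v in F) have
   probability prod_{v in F} (1/2) * Leb(A v `&` [0,1]); i.e. all D v, U v
   are mutually independent, D v ~ Bernoulli(1/2), U v ~ Uniform[0,1]. *)
Definition hail_law (R : realType) (d : measure_display) (T : measurableType d)
  (P : probability T R) (D : node -> T -> bool) (U : node -> T -> R) : Prop :=
  (forall v, measurable [set w | D v w]) /\
  (forall v, measurable_fun setT (U v)) /\
  (forall (F : seq node) (b : node -> bool) (A : node -> set R),
     uniq F -> (forall v, measurable (A v)) ->
     P [set w | forall v, v \in F -> D v w = b v /\ A v (U v w)] =
     (\prod_(v <- F) ((2^-1)%:E * (@lebesgue_measure R) (A v `&` `[0%R, 1%R])))%E).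

(* Main.v *)
Require Import Defs.
From HB Require Import structures.
From mathcomp Require Import all_boot all_order all_algebra.
From mathcomp Require Import all_classical all_reals all_analysis.
From mathcomp Require Import zify.
Set Implicit Arguments. Unset Strict Implicit. Unset Printing Implicit Defensive.
Import Order.TTheory GRing.Theory Num.Theory.
Local Open Scope classical_set_scope.
Local Open Scope ring_scope.


Section Det.
Variables (R : realType) (T : Type) (D : node -> T -> bool) (U : node -> T -> R).
Variables (p : R) (w : T).
Local Notation e := (hail_edge D U p w).

Lemma edge_shape a b : e a b ->
  (b.2 <= a.2)%N /\ (b.1 = a.1 - 1 \/ b.1 = a.1 \/ b.1 = a.1 + 1).
Proof.
case: a b => i n [j m] /=; rewrite /hail_edge.
case/orP => [/and4P[_ /eqP -> _ /orP[/andP[/eqP -> _]|/andP[/eqP -> _]]]|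
  /and3P[_ /eqP -> /orP[/eqP ->|/andP[_ /orP[/eqP ->|/eqP ->]]]]].
- by split => //; right; right.
- by split => //; left; lia.
- by split; [lia| right; left].
- by split; [lia| right; right].
- by split; [lia| left].
Qed.

Lemma edge_white a b : ~~ black U p w a -> e a b -> b = (a.1, a.2.-1).
Proof.
case: a b => i n [j m] /= Hw; rewrite /hail_edge.
case/orP => [/and4P[_ _ Hb _]|/and3P[_ /eqP -> /orP[/eqP -> //|/andP[Hb _]]]].
- by rewrite Hb in Hw.
- by rewrite Hb in Hw.
Qed.

Lemma edge_same_level i n b : e (i, n) b -> b.2 = n ->
  (b = (i + 1, n) /\ D (i, n) w) \/ (b = (i - 1, n) /\ ~~ D (i - 1, n) w).
Proof.
case: b => j m /= + Em; subst m; rewrite /hail_edge.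
case/orP => [/and4P[_ _ _ /orP[/andP[/eqP -> ->]|/andP[/eqP Ei Dj]]]|/and3P[Hn /eqP Hm _]].
- by left.
- right; have -> : j = i - 1 by lia.
  by rewrite Ei addrK in Dj *.
- lia.
Qed.

Lemma path_levels x s : path e x s -> forall z, z \in s -> (z.2 <= x.2)%N.
Proof.
elim: s x => [//|y s IH] x; move=> /andP[exy py] z.
have [le _] := edge_shape exy.
rewrite in_cons => /orP[/eqP -> //|zs].
exact: leq_trans (IH _ py _ zs) le.
Qed.

Lemma path_right s i n : D (i, n) w -> path e (i + 1, n) s ->
  forall z, z \in s -> (z.2 < n)%N \/ i < z.1.
Proof.
elim: s i => [//|y s IH] i Di; move=> /andP[exy py] z.
have [le _] := edge_shape exy.
have [lt|eqn] : (y.2 < n)%N \/ y.2 = n by simpl in le; lia.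
  rewrite in_cons => /orP[/eqP -> |zs]; first by left.
  by left; exact: leq_ltn_trans (path_levels py zs) lt.
case: (edge_same_level exy eqn) => [[Ey Dy]|[Ey Dy]].
  subst y; rewrite in_cons => /orP[/eqP -> /=|zs]; first by right; lia.
  by case: (IH _ Dy py z zs) => [->|h]; [left|right; lia].
by rewrite addrK Di in Dy.
Qed.

Lemma path_left s i n : ~~ D (i, n) w -> path e (i, n) s ->
  forall z, z \in s -> (z.2 < n)%N \/ z.1 < i + 1.
Proof.
elim: s i => [//|y s IH] i Di; move=> /andP[exy py] z.
have [le _] := edge_shape exy.
have [lt|eqn] : (y.2 < n)%N \/ y.2 = n by simpl in le; lia.
  rewrite in_cons => /orP[/eqP -> |zs]; first by left.
  by left; exact: leq_ltn_trans (path_levels py zs) lt.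
case: (edge_same_level exy eqn) => [[Ey Dy]|[Ey Dy]].
  by rewrite Dy in Di.
subst y; rewrite in_cons => /orP[/eqP -> /=|zs]; first by right; lia.
by case: (IH _ Dy py z zs) => [->|h]; [left|right; lia].
Qed.

Lemma path_notin x s : path e x s -> x \notin s.
Proof.
case: s => [//|y s]; move=> /andP[exy py]; case: x exy => i n exy.
have [le _] := edge_shape exy.
rewrite in_cons negb_or; apply/andP; split.
  apply/eqP => Ey; subst y.
  move: exy; rewrite /hail_edge => /orP[/and4P[_ _ _ /orP[/andP[/eqP h _]|/andP[/eqP h _]]]|/and3P[h1 /eqP h2 _]]; lia.
have [lt|eqn] : (y.2 < n)%N \/ y.2 = n by simpl in le; lia.
  apply/negP => /(path_levels py) /=; lia.
case: (edge_same_level exy eqn) => [[Ey Dy]|[Ey Dy]]; subst y.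
  apply/negP => /(path_right Dy py) /=; lia.
apply/negP => /(path_left Dy py) /=; lia.
Qed.

Lemma path_uniq x s : path e x s -> uniq (x :: s).
Proof.
elim: s x => [//|y s IH] x ps.
rewrite cons_uniq path_notin //; case/andP: ps => _ py.
exact: IH.
Qed.

End Det.


Definition dirs : seq int := [:: -1; 0; 1].

Fixpoint Ch (m : nat) (i : int) (k : nat) : seq (seq node) :=
  if k is k'.+1 then
    flatten [seq flatten [seq [seq (i, m') :: c | c <- Ch m' (i + d) k'] | d <- dirs]
            | m' <- index_iota 0 m.+1]
  else [:: [::]].

Lemma Ch_S m i k : Ch m i k.+1 =
  flatten [seq flatten [seq [seq (i, m') :: c | c <- Ch m' (i + d) k] | d <- dirs]
            | m' <- index_iota 0 m.+1].
Proof. by []. Qed.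

Lemma mem_Ch_cons m m' i d k c : (m' <= m)%N -> d \in dirs ->
  c \in Ch m' (i + d) k -> (i, m') :: c \in Ch m i k.+1.
Proof.
move=> le dd cc; apply/flattenP.
exists (flatten [seq [seq (i, m') :: c | c <- Ch m' (i + d) k] | d <- dirs]).
  by apply/mapP; exists m' => //; rewrite mem_index_iota; lia.
apply/flattenP; exists [seq (i, m') :: c | c <- Ch m' (i + d) k].
  by apply/mapP; exists d.
by apply/mapP; exists c.
Qed.

Lemma mem_Ch_inv m i k c : c \in Ch m i k.+1 ->
  exists m' d c', [/\ (m' <= m)%N, d \in dirs, c' \in Ch m' (i + d) k &
    c = (i, m') :: c'].
Proof.
move=> /flattenP[s1 /mapP[m' Hm' ->] /flattenP[s2 /mapP[d Hd ->] /mapP[c' Hc' ->]]].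
by exists m', d, c'; split => //; move: Hm'; rewrite mem_index_iota; lia.
Qed.

Lemma Ch_mono k m1 m2 i c : (m1 <= m2)%N -> c \in Ch m1 i k -> c \in Ch m2 i k.
Proof.
case: k => [//|k] le /mem_Ch_inv[m' [d [c' [h1 h2 h3 ->]]]].
by apply: mem_Ch_cons h2 h3; apply: leq_trans le.
Qed.

Lemma size_flatten_le (A B : Type) (f : A -> seq B) (b : A -> nat) s :
  (forall x, (size (f x) <= b x)%N) ->
  (size (flatten (map f s)) <= \sum_(x <- s) b x)%N.
Proof.
elim: s => [|x s IH] H; first by rewrite big_nil.
rewrite /= size_cat big_cons; apply: leq_add; [exact: H|exact: IH].
Qed.

Lemma sum_pow2 m : (\sum_(0 <= j < m.+1) 2 ^ j < 2 ^ m.+1)%N.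
Proof.
elim: m => [|m IH]; first by rewrite big_nat1.
rewrite (@big_nat_recr _ _ _ m.+1) //= !expnS; move: IH; rewrite expnS; lia.
Qed.

Lemma size_Ch k m i : (size (Ch m i k) <= 3 ^ k * 2 ^ (m + k))%N.
Proof.
elim: k m i => [|k IH] m i; first by rewrite /= expn0 mul1n addn0 expn_gt0.
rewrite Ch_S.
apply: (@leq_trans (\sum_(m' <- index_iota 0 m.+1) 3 ^ k.+1 * 2 ^ (m' + k))).
  apply: size_flatten_le => m'.
  apply: (@leq_trans (\sum_(d <- dirs) 3 ^ k * 2 ^ (m' + k))).
    by apply: size_flatten_le => d; rewrite size_map.
  by rewrite big_cons big_cons big_cons big_nil expnS; lia.
rewrite -big_distrr /= leq_mul2l; apply/orP; right.
rewrite (eq_bigr (fun j : nat => (2 ^ j * 2 ^ k)%N)); last by move=> j _; rewrite expnD.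
rewrite -big_distrl /= addnS expnS expnD.
have := sum_pow2 m; rewrite expnS => h.
rewrite mulnA leq_mul2r; apply/orP; right; lia.
Qed.

Section ChainIn.
Variables (R : realType) (T : Type) (D : node -> T -> bool) (U : node -> T -> R).
Variables (p p0 : R) (w : T).
Hypothesis pp0 : p <= p0.
Local Notation e := (hail_edge D U p w).
Local Notation b0 := (black U p0 w).

Lemma black_mono v : black U p w v -> b0 v.
Proof. by rewrite /black => h; apply: le_trans h pp0. Qed.

Lemma chain_in s x k : path e x s -> (k <= count b0 (x :: s))%N ->
  take k (seq.filter b0 (x :: s)) \in Ch x.2 x.1 k.
Proof.
elim: s x k => [|y s IH] x [|k] ps hk; rewrite ?take0 ?mem_head //.
- move: hk; rewrite /=; case: ifP => bx /=; last by rewrite ltn0.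
  rewrite ltnS leqn0 => /eqP ->; rewrite /=.
  case: x bx ps => i n /= _ _.
  by apply: (@mem_Ch_cons n n i 0 0 [::]) => //; rewrite mem_head.
- move: ps => /andP[exy py].
  case bx: (b0 x).
    rewrite /= bx /=.
    have hk' : (k <= count b0 (y :: s))%N by move: hk; rewrite /= bx.
    have := IH y k py hk'.
    have [le [hd|[hd|hd]]] := edge_shape exy; case: x exy bx hk {hk'} le hd => i n /= exy bx hk le hd.
    + move/(Ch_mono le); rewrite hd => H.
      by apply: (mem_Ch_cons (d := -1)) => //.
    + move/(Ch_mono le); rewrite hd => H.
      by apply: (mem_Ch_cons (d := 0)) => //; rewrite addr0.
    + move/(Ch_mono le); rewrite hd => H.
      by apply: (mem_Ch_cons (d := 1)) => //.
  have wx : ~~ black U p w x by apply/negP => /black_mono; rewrite bx.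
  have Ey := edge_white wx exy.
  have hk' : (k.+1 <= count b0 (y :: s))%N by move: hk; rewrite /= bx.
  have H := IH y k.+1 py hk'.
  have -> : seq.filter b0 (x :: y :: s) = seq.filter b0 (y :: s) by rewrite [LHS]/= bx.
  have e1 : x.1 = y.1 by rewrite Ey.
  rewrite e1; apply: (Ch_mono _ H); rewrite Ey; exact: leq_pred.
Qed.

End ChainIn.

Lemma size_mem_Ch k m i c : c \in Ch m i k -> size c = k.
Proof.
elim: k m i c => [|k IH] m i c; first by rewrite inE => /eqP ->.
by move=> /mem_Ch_inv[m' [d [c' [_ _ h ->]]]] /=; rewrite (IH _ _ _ h).
Qed.


Fixpoint bits k : seq (seq bool) :=
  if k is k'.+1 then [seq true :: s | s <- bits k'] ++ [seq false :: s | s <- bits k']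
  else [:: [::]].

Lemma size_bits k : size (bits k) = (2 ^ k)%N.
Proof. by elim: k => //= k IH; rewrite size_cat !size_map IH expnS; lia. Qed.

Lemma mem_bits s : s \in bits (size s).
Proof.
elim: s => [|b s IH] /=; first by rewrite mem_head.
by rewrite mem_cat; case: b; [rewrite map_f|rewrite map_f ?orbT].
Qed.

Section Prob.
Variables (R : realType) (d : measure_display) (T : measurableType d).
Variables (P : probability T R) (D : node -> T -> bool) (U : node -> T -> R).
Hypothesis HL : hail_law P D U.

Definition A0 (p0 : R) : set R := `]-oo, p0]%classic.

Definition G p0 (c : seq node) (b : node -> bool) : set T :=
  [set w | forall v, v \in c -> D v w = b v /\ A0 p0 (U v w)].

Lemma mA0 p0 : measurable (A0 p0).
Proof. exact: measurable_itv. Qed.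

Lemma mG p0 c b : measurable (G p0 c b).
Proof.
case: HL => mD [mU _].
elim: c => [|v c IH].
  by rewrite (_ : G p0 [::] b = setT); [exact: measurableT|apply/seteqP; split].
rewrite (_ : G p0 (v :: c) b =
  ([set w | D v w = b v] `&` (setT `&` U v @^-1` A0 p0)) `&` G p0 c b).
  apply: measurableI => //; apply: measurableI; last exact: mU (mA0 p0).
  case: (b v).
    by rewrite (_ : [set w | D v w = true] = [set w | D v w]) //; apply/seteqP; split.
  rewrite (_ : [set w | D v w = false] = ~` [set w | D v w]).
    exact: measurableC.
  by apply/seteqP; split => w /=; case: (D v w).
apply/seteqP; split => w /=.
  move=> H; have [h1 h2] := H v (mem_head _ _).
  split; first by split.
  by move=> u uc; apply: H; rewrite in_cons uc orbT.
move=> [[h1 [_ h2]] H] u; rewrite in_cons => /orP[/eqP ->|uc]; first by [].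
exact: H.
Qed.

Lemma leb01 (p0 : R) : 0 <= p0 <= 1 ->
  (@lebesgue_measure R) (A0 p0 `&` `[0%R, 1%R]) = p0%:E.
Proof.
move=> /andP[p00 p01].
rewrite (_ : A0 p0 `&` `[0%R, 1%R] = `[0%R, p0]%classic).
  rewrite lebesgue_measure_itv /= lte_fin oppr0 adde0.
  by case: ifP => // /negbT; rewrite -leNgt => h; apply/eqP; rewrite eq_sym eqe; apply/eqP/le_anti; rewrite h p00.
apply/seteqP; split => x /=; rewrite /A0 !in_itv /= ?andbT.
  by rewrite in_itv /= => -[h1 /andP[h2 h3]]; rewrite h2 h1.
by move=> /andP[h1 h2]; rewrite in_itv /= h2 h1 (le_trans h2 p01).
Qed.

Lemma prod_const_seq (I : Type) (c : seq I) (x : R) : \prod_(v <- c) x = x ^+ size c.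
Proof. by elim: c => [|v c IH]; rewrite ?big_nil ?big_cons ?IH ?exprS. Qed.

Lemma PG p0 c b : 0 <= p0 <= 1 -> uniq c ->
  P (G p0 c b) = ((2^-1 * p0) ^+ size c)%:E.
Proof.
move=> hp uc; case: HL => _ [_ H].
have := H c b (fun=> A0 p0) uc (fun=> mA0 p0).
rewrite /G => ->.
under eq_bigr do rewrite leb01 // -EFinM.
by rewrite prodEFin prod_const_seq.
Qed.

Lemma measure_bigU (I : Type) (L : seq I) (F : I -> set T) :
  (forall x, measurable (F x)) ->
  (P (\big[setU/set0]_(x <- L) F x) <= \sum_(x <- L) P (F x))%E.
Proof.
move=> mF; elim: L => [|x L IH]; first by rewrite !big_nil measure0.
rewrite !big_cons; apply: le_trans (measureU2 _ _ _) _ => //.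
  by apply: bigsetU_measurable => y _.
exact: leeD.
Qed.

Lemma sum_const_seq (I : Type) (c : seq I) (x : R) : \sum_(v <- c) x = x *+ size c.
Proof. by elim: c => [|v c IH]; rewrite ?big_nil ?big_cons ?IH ?mulrS. Qed.

Lemma half_pow (x : R) k : (2^-1 * x) ^+ k *+ (2 ^ k)%N = x ^+ k.
Proof.
rewrite -[_ *+ (2 ^ k)%N]mulr_natr natrX exprMn mulrAC -exprMn mulVf ?expr1n ?mul1r //.
Qed.

Definition bfun (c : seq node) (s : seq bool) (v : node) := nth false s (index v c).

Definition Eb p0 c : set T :=
  if uniq c then \big[setU/set0]_(s <- bits (size c)) G p0 c (bfun c s) else set0.

Definition E p0 n k : set T := \big[setU/set0]_(c <- Ch n 0 k) Eb p0 c.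

Lemma mEb p0 c : measurable (Eb p0 c).
Proof.
rewrite /Eb; case: ifP => _ //.
by apply: bigsetU_measurable => s _; exact: mG.
Qed.

Lemma mE p0 n k : measurable (E p0 n k).
Proof. by apply: bigsetU_measurable => c _; exact: mEb. Qed.

Lemma PEb p0 c : 0 <= p0 <= 1 -> (P (Eb p0 c) <= (p0 ^+ size c)%:E)%E.
Proof.
move=> hp; rewrite /Eb; case: ifP => uc; last first.
  by rewrite measure0 lee_fin exprn_ge0 //; case/andP: hp.
apply: le_trans (measure_bigU _ (fun s => mG p0 c (bfun c s))) _.
under eq_bigr do rewrite PG //.
rewrite sumEFin sum_const_seq size_bits lee_fin.
by rewrite half_pow.
Qed.

Lemma PE p0 n k : 0 <= p0 <= 1 ->
  (P (E p0 n k) <= (((3 ^ k * 2 ^ (n + k))%N)%:R * p0 ^+ k)%:E)%E.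
Proof.
move=> hp.
apply: le_trans (measure_bigU _ (fun c => mEb p0 c)) _.
rewrite big_seq.
apply: (@le_trans _ _ (\sum_(c <- Ch n 0 k | c \in Ch n 0 k) (p0 ^+ k)%:E)%E).
  apply: lee_sum => c cC.
  by rewrite -(size_mem_Ch cC); exact: PEb.
rewrite -big_seq sumEFin sum_const_seq lee_fin -[_ *+ size _]mulr_natl.
apply: ler_wpM2r; first by rewrite exprn_ge0 //; case/andP: hp.
by rewrite ler_nat size_Ch.
Qed.

End Prob.


Lemma in_bigsetU (T : Type) (I : eqType) (L : seq I) (F : I -> set T) (x : I) (w : T) :
  x \in L -> F x w -> (\big[setU/set0]_(y <- L) F y) w.
Proof.
elim: L => [//|y L IH]; rewrite in_cons big_cons => /orP[/eqP <- Fw|xL Fw].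
  by left.
by right; exact: IH.
Qed.
Arguments in_bigsetU {T I L F} x w.

Section Mem.
Variables (R : realType) (d : measure_display) (T : measurableType d).
Variables (D : node -> T -> bool) (U : node -> T -> R).

Lemma path_inE (p p0 : R) w n s k : p <= p0 ->
  path (hail_edge D U p w) ((0 : int), n) s ->
  (k <= count (black U p w) (((0 : int), n) :: s))%N -> E D U p0 n k w.
Proof.
move=> pp0 ps hk.
have hk0 : (k <= count (black U p0 w) (((0 : int), n) :: s))%N.
  apply: leq_trans hk _; apply: sub_count => v; exact: black_mono.
set c := take k (seq.filter (black U p0 w) (((0 : int), n) :: s)).
have cC : c \in Ch n 0 k by exact: (chain_in pp0 ps hk0).
apply: (in_bigsetU c) => //.
have uc : uniq c by rewrite take_uniq // filter_uniq // (path_uniq ps).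
rewrite /Eb uc.
apply: (in_bigsetU [seq D v w | v <- c]); first by rewrite -(size_map (fun v => D v w) c) mem_bits.
move=> v vc; split.
  by rewrite /bfun (nth_map v) ?index_mem // nth_index.
have : v \in seq.filter (black U p0 w) (((0 : int), n) :: s) by apply: mem_take vc.
by rewrite mem_filter /black /A0 /= in_itv /= => /andP[].
Qed.

Lemma Hmax_le (p p0 : R) w n k : p <= p0 -> ~ E D U p0 n k.+1 w ->
  (Hmax D U p w 0 n <= (k%:R)%:E)%E.
Proof.
move=> pp0 nE; apply/ereal_supP => _ [s ps <-].
rewrite lee_fin ler_nat; rewrite leqNgt; apply/negP => hk.
by apply: nE; apply: (path_inE pp0 ps hk).
Qed.

Lemma Hmax_ge0 (p : R) w n : (0 <= Hmax D U p w 0 n)%E.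
Proof.
apply: le_ereal_sup_tmp; exists ((path_height U p w ((0 : int), n) [::])%:R)%:E => //.
by exists [::].
Qed.

End Mem.


Definition kk (q n : nat) := (n %/ q.+1).+1.
Definition Mq (q : nat) := (6 * 32 ^ q.+1)%N.

Lemma kk_ge q n : (n < q.+1 * kk q n)%N.
Proof.
rewrite /kk {1}(divn_eq n q.+1).
have := ltn_pmod n (ltn0Sn q); lia.
Qed.

Lemma nat_bound q n :
  (3 ^ kk q n * 2 ^ (n + kk q n) * 2 ^ (n + 1) <= Mq q ^ kk q n)%N.
Proof.
set k := kk q n.
have hk := kk_ge q n; rewrite -/k in hk.
rewrite /Mq expnMn (_ : 6 = 3 * 2)%N // expnMn -expnM.
rewrite (_ : 32 = 2 ^ 5)%N // -expnM -!mulnA leq_mul2l; apply/orP; right.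
rewrite -!expnD.
apply: leq_pexp2l => //; lia.
Qed.

Section Real.
Variable R : realType.

Definition p0 (q : nat) : R := (Mq q)%:R^-1.

Lemma p0_gt0 q : 0 < p0 q.
Proof. by rewrite /p0 invr_gt0 ltr0n /Mq muln_gt0 expn_gt0. Qed.

Lemma p0_le1 q : p0 q <= 1.
Proof. by rewrite /p0 invf_le1 ?ler1n ?ltr0n /Mq ?muln_gt0 ?expn_gt0. Qed.

Lemma real_bound q n :
  ((3 ^ kk q n * 2 ^ (n + kk q n))%N%:R * p0 q ^+ kk q n) <= 1 / (2 ^ (n + 1))%N%:R.
Proof.
rewrite /p0 exprVn -natrX mul1r.
rewrite ler_pdivrMr ?ltr0n ?expn_gt0 ?muln_gt0 ?expn_gt0 //.
by rewrite mulrC ler_pdivlMr ?ltr0n ?expn_gt0 // -natrM ler_nat nat_bound.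
Qed.

End Real.


Lemma esup_bounds (R : realType) (u : (\bar R)^nat) M l :
  (forall n, (0 <= u n)%E) -> (forall n, (M <= n)%N -> (u n <= l)%E) ->
  (0 <= limn_esup u)%E /\ (limn_esup u <= l)%E.
Proof.
move=> u0 ul; rewrite limn_esup_lim; split.
  apply: lime_ge; first exact: is_cvg_esups.
  apply: nearW => m; apply: le_ereal_sup_tmp; exists (u m) => //.
  by exists m => /=.
apply: lime_le; first exact: is_cvg_esups.
near=> m; apply/ereal_supP => _ [k /= mk <-]; apply: ul.
apply: leq_trans mk; near: m; by exists M.
Unshelve. all: by end_near.
Qed.

Section Final.
Variables (R : realType) (d : measure_display) (T : measurableType d).
Variables (P : probability T R) (D : node -> T -> bool) (U : node -> T -> R).
Hypothesis HL : hail_law P D U.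

Definition Eq q n : set T := E D U (p0 R q) n (kk q n).

Lemma PEq0 q : P (lim_sup_set (Eq q)) = 0%E.
Proof.
apply: lim_sup_set_cvg0; first by move=> n; exact: (mE HL).
have hp : 0 <= p0 R q <= 1 by rewrite (ltW (p0_gt0 _ _)) p0_le1.
apply: (@le_lt_trans _ _ (\sum_(n <oo) (1 / (2 ^ (n + 1))%N%:R)%:E)%E).
  apply: lee_nneseries => [n _ _|n _]; first exact: measure_ge0.
  apply: le_trans (PE HL _ _ hp) _.
  by rewrite lee_fin real_bound.
have := @cvg_geometric_eseries_half R (1 : R) 0.
move/cvg_lim => H.
rewrite (_ : (\sum_(n <oo) _)%E = 1%E) ?ltry //.
rewrite -[LHS]/(limn (eseries (fun k : nat => (1 / (2 ^ (k + 1))%:R)%:E))).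
by rewrite H // expr0 divr1.
Qed.

Lemma Hratio_ge0 (p : R) w n : (0 <= Hratio D U p w n)%E.
Proof. by apply: mule_ge0; [exact: Hmax_ge0|rewrite lee_fin invr_ge0]. Qed.

Lemma Hratio_le q (p : R) w n : p <= p0 R q -> ~ Eq q n w -> (0 < n)%N ->
  (Hratio D U p w n <= (q.+1%:R^-1)%:E)%E.
Proof.
move=> pp nE n0.
have H := Hmax_le (k := n %/ q.+1) pp nE.
apply: le_trans (lee_wpmul2r _ H) _; first by rewrite lee_fin invr_ge0.
rewrite -EFinM lee_fin.
rewrite -[_ * _^-1]/(_ / _) ler_pdivrMr ?ltr0n //.
by rewrite mulrC ler_pdivlMr ?ltr0n // -natrM ler_nat leq_divM.
Qed.

End Final.

Unset Implicit Arguments.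
Set Strict Implicit.
Theorem lemma7 (R : realType) (d : measure_display) (T : measurableType d)
  (P : probability T R) (D : node -> T -> bool) (U : node -> T -> R) :
  hail_law P D U ->
  {ae P, forall w : T,
     (fun p : R => limn_esup (Hratio D U p w)) x @[x --> 0^'+] --> (0 : \bar R)}.
Proof.
move=> HL.
have N0 : P.-negligible (\bigcup_q lim_sup_set (Eq D U q)).
  apply: negligible_bigcup => q; exists (lim_sup_set (Eq D U q)); split => //.
    apply: bigcapT_measurable => n; apply: bigcup_measurable => j _.
    exact: (mE HL).
  exact: PEq0.
apply: (negligibleS _ N0).
move=> w /= nconv; apply: contrapT => Hn; apply: nconv.
have good q : exists M, forall n, (M <= n)%N -> ~ Eq D U q n w.
  apply: contrapT => H; apply: Hn; exists q => // M _.
  apply: contrapT => H2; apply: H; exists M => n Mn Fn; apply: H2.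
  by exists n.
set f := fun x => limn_esup (Hratio D U x w).
have bnd q x : 0 < x <= p0 R q -> (0 <= f x)%E /\ (f x <= (q.+1%:R^-1)%:E)%E.
  case/andP => x0 xp; case: (good q) => M HM.
  apply: (esup_bounds (M := M.+1)) => [n|n Mn]; first exact: Hratio_ge0.
  by apply: (Hratio_le xp); [apply: HM; lia|lia].
apply: cvg_EFin.
  near=> x.
  have x0 : 0 < x by near: x; exact: nbhs_right_gt.
  have xp : x <= p0 R 0 by near: x; exact: nbhs_right_le (p0_gt0 R 0).
  have hx : 0 < x <= p0 R 0 by rewrite x0 xp.
  have [h1 h2] := bnd 0%N x hx.
  by rewrite ge0_fin_numE // (le_lt_trans h2) ?ltry.
apply/cvgrPdist_le => e e0.
set q := Num.truncn (e^-1).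
near=> x.
have x0 : 0 < x by near: x; exact: nbhs_right_gt.
have xp : x <= p0 R q by near: x; exact: nbhs_right_le (p0_gt0 R q).
have hx : 0 < x <= p0 R q by rewrite x0 xp.
have [h1 h2] := bnd q x hx.
have hf : f x \is a fin_num by rewrite ge0_fin_numE // (le_lt_trans h2) ?ltry.
move: h1 h2; rewrite -(fineK hf) !lee_fin => h1 h2.
rewrite /= sub0r normrN ger0_norm //.
apply: le_trans h2 _.
rewrite -[leRHS](invrK e) lef_pV2 ?posrE ?invr_gt0 ?ltr0n //.
exact: ltW (truncnS_gt _).
Unshelve. all: by end_near.
Qed.
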